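(* Let $X$ be a real Banach space and let $\mathcal{G}^0\subset\mathcal{G}_X$ be a subgroup such that $X$ is convex-transitive with respect to $\mathcal{G}^0$, i.e. $\overline{\mathrm{conv}}(\{T(x): T\in\mathcal{G}^0\})=B_X$ for every $x\in S_X$. Let $C\subset S_X$ be norm-dense in $S_X$, and let $A\subset X$ be a closed subspace whose density character $\kappa=\mathrm{dens}(A)$ is infinite. Then there is a closed subspace $Y\subset X$ such that: (1) $A\subset Y$; (2) $\mathrm{dens}(Y)=\kappa$; (3) $Y$ is convex-transitive with respect to the subgroup $\mathcal{G}^0_Y=\{T|_Y : T\in\mathcal{G}^0,\ T(Y)=Y\}$ of the isometry group of $Y$; (4) $C\cap S_Y$ is norm-dense in $S_Y$.
   Context: $\mathcal{G}_X$ denotes the group of rotations of $X$, i.e. surjective linear isometries $X\to X$. The density character $\mathrm{dens}(T)$ of a topological space is the least cardinality of a dense subset. *)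

(* Defs.v *)
From Stdlib Require Import Reals List.
Open Scope R_scope.

Record Banach := {
  car :> Type;
  vadd : car -> car -> car;
  vzero : car;
  vopp : car -> car;
  vscal : R -> car -> car;
  vnorm : car -> R;
  vaddA : forall x y z, vadd x (vadd y z) = vadd (vadd x y) z;
  vaddC : forall x y, vadd x y = vadd y x;
  vadd0 : forall x, vadd x vzero = x;
  vaddN : forall x, vadd x (vopp x) = vzero;
  vscal1 : forall x, vscal 1 x = x;
  vscalA : forall a b x, vscal a (vscal b x) = vscal (a * b) x;
  vscalDr : forall a x y, vscal a (vadd x y) = vadd (vscal a x) (vscal a y);
  vscalDl : forall a b x, vscal (a + b) x = vadd (vscal a x) (vscal b x);
  vnorm_ge0 : forall x, 0 <= vnorm x;
  vnorm_eq0 : forall x, vnorm x = 0 -> x = vzero;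
  vnorm_scal : forall a x, vnorm (vscal a x) = Rabs a * vnorm x;
  vnorm_tri : forall x y, vnorm (vadd x y) <= vnorm x + vnorm y;
  vcomplete : forall u : nat -> car,
    (forall eps, 0 < eps -> exists N, forall m n, (N <= m)%nat -> (N <= n)%nat ->
        vnorm (vadd (u m) (vopp (u n))) < eps) ->
    exists l, forall eps, 0 < eps -> exists N, forall n, (N <= n)%nat ->
        vnorm (vadd (u n) (vopp l)) < eps
}.

Arguments vadd {_}. Arguments vzero {_}. Arguments vopp {_}.
Arguments vscal {_}. Arguments vnorm {_}.

Section Defs.
Variable X : Banach.

Definition dist (x y : X) : R := vnorm (vadd x (vopp y)).

Definition sphere (x : X) : Prop := vnorm x = 1.
Definition ball1 (x : X) : Prop := vnorm x <= 1.

Definition closure (S : X -> Prop) (x : X) : Prop :=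
  forall eps, 0 < eps -> exists y, S y /\ dist x y < eps.

(* D is norm-dense in S (D need not be contained in S) *)
Definition dense_in (D S : X -> Prop) : Prop :=
  forall x, S x -> forall eps, 0 < eps -> exists y, D y /\ dist x y < eps.

Fixpoint comb (l : list (R * X)) : X :=
  match l with
  | nil => vzero
  | (a, x) :: l' => vadd (vscal a x) (comb l')
  end.

Definition conv (S : X -> Prop) (x : X) : Prop :=
  exists l : list (R * X),
    l <> nil /\
    Forall (fun p => 0 <= fst p /\ S (snd p)) l /\
    fold_right Rplus 0 (map fst l) = 1 /\
    comb l = x.

Definition closed_subspace (Y : X -> Prop) : Prop :=
  Y vzero /\
  (forall x y, Y x -> Y y -> Y (vadd x y)) /\
  (forall a x, Y x -> Y (vscal a x)) /\
  (forall x, closure Y x -> Y x).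

Definition linear_map (T : X -> X) : Prop :=
  (forall x y, T (vadd x y) = vadd (T x) (T y)) /\
  (forall a x, T (vscal a x) = vscal a (T x)).

Definition rotation (T : X -> X) : Prop :=
  linear_map T /\ (forall x, vnorm (T x) = vnorm x) /\
  (forall y, exists x, T x = y).

Definition rot_subgroup (G : (X -> X) -> Prop) : Prop :=
  (forall T, G T -> rotation T) /\
  G (fun x => x) /\
  (forall S T, G S -> G T -> G (fun x => S (T x))) /\
  (forall T, G T -> exists S, G S /\ (forall x, S (T x) = x) /\ (forall x, T (S x) = x)).

Definition orbit (G : (X -> X) -> Prop) (x : X) (y : X) : Prop :=
  exists T, G T /\ T x = y.

Definition convex_transitive (G : (X -> X) -> Prop) : Prop :=
  forall x, sphere x -> forall z, closure (conv (orbit G x)) z <-> ball1 z.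

Definition maps_onto (T : X -> X) (Y : X -> Prop) : Prop :=
  (forall y, Y y -> Y (T y)) /\ (forall y, Y y -> exists x, Y x /\ T x = y).

(* G^0_Y as maps acting on Y (restrictions of T in G with T(Y)=Y) *)
Definition restr_group (G : (X -> X) -> Prop) (Y : X -> Prop) (T : X -> X) : Prop :=
  G T /\ maps_onto T Y.

Definition convex_transitive_sub (G : (X -> X) -> Prop) (Y : X -> Prop) : Prop :=
  forall y, Y y -> sphere y ->
    forall z, (Y z /\ closure (conv (orbit (restr_group G Y) y)) z) <-> (Y z /\ ball1 z).

Definition card_le (P Q : X -> Prop) : Prop :=
  exists f : X -> X, (forall x, P x -> Q (f x)) /\
    (forall x y, P x -> P y -> f x = f y -> x = y).

Definition finite_set (P : X -> Prop) : Prop :=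
  exists l : list X, forall x, P x -> In x l.

(* dens(S) <= dens(T), where dens = least cardinality of a dense subset:
   for every dense subset D of T there is a dense subset E of S with |E| <= |D|. *)
Definition dens_le (S T : X -> Prop) : Prop :=
  forall D, (forall x, D x -> T x) -> dense_in D T ->
    exists E, (forall x, E x -> S x) /\ dense_in E S /\ card_le E D.

Definition dens_eq (S T : X -> Prop) : Prop := dens_le S T /\ dens_le T S.

Definition dens_infinite (S : X -> Prop) : Prop :=
  forall D, (forall x, D x -> S x) -> dense_in D S -> ~ finite_set D.

End Defs.

(* Main.v *)
Require Import Defs.
From Stdlib Require Import Reals List.
From Stdlib Require Import Lra Classical ClassicalEpsilon FunctionalExtensionality PropExtensionality ZArith Arith Lia Cantor.

Open Scope nat_scope.


Definition incl_s {U : Type} (A B : U -> Prop) := forall x, A x -> B x.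
Definition bigU {U : Type} (Ch : (U -> Prop) -> Prop) : U -> Prop :=
  fun x => exists S, Ch S /\ S x.

Lemma set_ext {U : Type} (A B : U -> Prop) : incl_s A B -> incl_s B A -> A = B.
Proof.
  intros H1 H2; apply functional_extensionality; intro x;
  apply propositional_extensionality; split; auto.
Qed.

Inductive tower {U : Type} (S0 : U -> Prop) (nxt : (U -> Prop) -> (U -> Prop))
  : (U -> Prop) -> Prop :=
| tw0 : tower S0 nxt S0
| twn : forall S, tower S0 nxt S -> tower S0 nxt (nxt S)
| twu : forall Ch, (forall S, Ch S -> tower S0 nxt S) -> (exists S, Ch S) ->
        tower S0 nxt (bigU Ch).

Lemma tower_chain {U : Type} (S0 : U -> Prop) (nxt : (U -> Prop) -> (U -> Prop)) :
  (forall S, incl_s S (nxt S)) ->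
  forall x y, tower S0 nxt x -> tower S0 nxt y -> incl_s x y \/ incl_s y x.
Proof.
  intros Hinf.
  assert (HS0 : forall x, tower S0 nxt x -> incl_s S0 x).
  { intros x Hx; induction Hx.
    - intros u h; exact h.
    - intros u h; apply Hinf; auto.
    - destruct H1 as [S HS]. intros u h. exists S; split; auto. apply H0; auto. }
  set (normal := fun c => forall x, tower S0 nxt x -> incl_s x c -> x <> c -> incl_s (nxt x) c).
  assert (L1 : forall c, tower S0 nxt c -> normal c ->
     forall x, tower S0 nxt x -> incl_s x c \/ incl_s (nxt c) x).
  { intros c Hc Hn x Hx; induction Hx.
    - left; apply HS0; auto.
    - destruct IHHx as [H|H].
      + destruct (classic (S = c)) as [->|Hne].
        * right; intros u h; exact h.
        * left; apply Hn; auto.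
      + right; intros u h; apply Hinf; apply H; auto.
    - destruct (classic (exists S, Ch S /\ incl_s (nxt c) S)) as [[S [HS HS']]|Hno].
      + right; intros u h; exists S; split; auto.
      + left; intros u [S [HS Su]].
        destruct (H0 S HS) as [H2|H2]; auto.
        exfalso; apply Hno; eauto. }
  assert (L2 : forall c, tower S0 nxt c -> normal c).
  { intros c Hc; induction Hc.
    - intros x Hx Hi Hne; exfalso; apply Hne; apply set_ext; auto; apply HS0; auto.
    - intros x Hx Hi Hne.
      destruct (L1 S Hc IHHc x Hx) as [H|H].
      + destruct (classic (x = S)) as [->|Hne2].
        * intros u h; exact h.
        * intros u h; apply Hinf; apply (IHHc x Hx H Hne2); auto.
      + exfalso; apply Hne; apply set_ext; auto.
    - intros x Hx Hi Hne.
      destruct (classic (exists c, Ch c /\ ~ incl_s (nxt c) x)) as [[c [Hc Hc2]]|Hno].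
      + destruct (L1 c (H c Hc) (H0 c Hc) x Hx) as [H2|H2]; [|contradiction].
        destruct (classic (x = c)) as [->|Hne2].
        * assert (exists u, bigU Ch u /\ ~ c u) as [u [[c' [Hc' c'u]] ncu]].
          { apply NNPP; intro Hn'; apply Hne; apply set_ext; auto.
            intros u hu; apply NNPP; intro; apply Hn'; eauto. }
          destruct (L1 c (H c Hc) (H0 c Hc) c' (H c' Hc') ) as [H3|H3].
          -- exfalso; apply ncu; auto.
          -- intros v hv; exists c'; split; auto.
        * intros u hu; exists c; split; auto; apply (H0 c Hc x Hx H2 Hne2); auto.
      + exfalso; apply Hne; apply set_ext; auto.
        intros u [c [Hc cu]].
        destruct (classic (incl_s (nxt c) x)) as [H3|H3].
        * apply H3; apply Hinf; auto.
        * exfalso; apply Hno; eauto. }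
  intros x y Hx Hy.
  destruct (L1 y Hy (L2 y Hy) x Hx) as [H|H]; auto.
  right; intros u h; apply H; apply Hinf; auto.
Qed.

Lemma zorn_sets {U : Type} (Good : (U -> Prop) -> Prop) (S0 : U -> Prop) :
  Good S0 ->
  (forall Ch : (U -> Prop) -> Prop, (forall S, Ch S -> Good S) ->
     (forall S1 S2, Ch S1 -> Ch S2 -> incl_s S1 S2 \/ incl_s S2 S1) ->
     (exists S, Ch S) -> Good (bigU Ch)) ->
  exists M, Good M /\ incl_s S0 M /\ forall S, Good S -> incl_s M S -> incl_s S M.
Proof.
  intros HG0 Hch.
  apply NNPP; intro Hno.
  assert (Hstep : forall M, exists S, (Good M /\ incl_s S0 M) ->
                     Good S /\ incl_s M S /\ ~ incl_s S M).
  { intro M. destruct (classic (Good M /\ incl_s S0 M)) as [[H1 H2]|H].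
    - apply NNPP; intro Hn; apply Hno; exists M; split; auto; split; auto.
      intros S HS HMS; apply NNPP; intro HSM; apply Hn; exists S; auto.
    - exists M; intro; contradiction. }
  set (ch := fun M => epsilon (inhabits (fun _ : U => False)) (fun S => (Good M /\ incl_s S0 M) ->
                     Good S /\ incl_s M S /\ ~ incl_s S M)).
  assert (Hch' : forall M, (Good M /\ incl_s S0 M) -> Good (ch M) /\ incl_s M (ch M) /\ ~ incl_s (ch M) M).
  { intro M; unfold ch; apply epsilon_spec; apply Hstep. }
  set (nxt := fun M => fun u => M u \/ ch M u).
  assert (Hinf : forall S, incl_s S (nxt S)) by (intros S u h; left; auto).
  assert (Hgood : forall x, tower S0 nxt x -> Good x /\ incl_s S0 x).
  { intros x Hx; induction Hx.
    - split; auto; intros u h; auto.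
    - destruct (Hch' S IHHx) as [H1 [H2 H3]].
      replace (nxt S) with (ch S).
      + split; auto; intros u h; apply H2; apply IHHx; auto.
      + apply set_ext; intros u h; [right; auto| destruct h; auto].
    - split.
      + apply Hch; auto. intros; apply H0; auto.
        intros; apply (tower_chain S0 nxt Hinf); auto.
      + destruct H1 as [S HS]; intros u h; exists S; split; auto; apply H0; auto. }
  set (Wt := bigU (tower S0 nxt)).
  assert (HW : tower S0 nxt Wt) by (apply twu; eauto; exists S0; constructor).
  assert (HnW : tower S0 nxt (nxt Wt)) by (constructor; auto).
  destruct (Hch' Wt (Hgood Wt HW)) as [_ [_ H3]].
  apply H3; intros u h. exists (nxt Wt); split; auto; right; auto.
Qed.


Definition cle {T : Type} (P Q : T -> Prop) :=
  exists f : T -> T, (forall x, P x -> Q (f x)) /\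
    (forall x y, P x -> P y -> f x = f y -> x = y).
Definition infin {T : Type} (P : T -> Prop) := forall l : list T, exists x, P x /\ ~ In x l.
Definition pairing {T : Type} (P : T -> Prop) (F : T -> T -> T) :=
  (forall x y, P x -> P y -> P (F x y)) /\
  (forall x y x' y', P x -> P y -> P x' -> P y' -> F x y = F x' y' -> x = x' /\ y = y').

Lemma cle_refl {T} (P : T -> Prop) : cle P P.
Proof. exists (fun x => x); split; auto. Qed.

Lemma cle_trans {T} (P Q R : T -> Prop) : cle P Q -> cle Q R -> cle P R.
Proof.
  intros [f [f1 f2]] [g [g1 g2]]; exists (fun x => g (f x)); split; auto.
Qed.

Lemma cle_sub {T} (P Q : T -> Prop) : (forall x, P x -> Q x) -> cle P Q.
Proof. intros H; exists (fun x => x); split; auto. Qed.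

Lemma comparability {T : Type} (t0 : T) (P Q : T -> Prop) : cle P Q \/ cle Q P.
Proof.
  set (Good := fun R : T * T -> Prop =>
     (forall a b, R (a,b) -> P a /\ Q b) /\ (forall a b b', R (a,b) -> R (a,b') -> b = b') /\
     (forall a a' b, R (a,b) -> R (a',b) -> a = a')).
  destruct (zorn_sets Good (fun _ => False)) as [M [[G1 [G2 G3]] [_ Hmax]]].
  - split; [|split]; intros; contradiction.
  - intros Ch HG Hc [S0 HS0]. split; [|split].
    + intros a b [S [HS Sab]]; apply (HG S HS); auto.
    + intros a b b' [S [HS Sab]] [S' [HS' Sab']].
      destruct (Hc S S' HS HS') as [H|H].
      * apply (proj1 (proj2 (HG S' HS')) a); auto.
      * apply (proj1 (proj2 (HG S HS)) a); auto.
    + intros a a' b [S [HS Sab]] [S' [HS' Sab']].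
      destruct (Hc S S' HS HS') as [H|H].
      * apply (proj2 (proj2 (HG S' HS')) a a' b); auto.
      * apply (proj2 (proj2 (HG S HS)) a a' b); auto.
  - destruct (classic (forall a, P a -> exists b, M (a,b))) as [HA|HA].
    + left. exists (fun a => epsilon (inhabits t0) (fun b => M (a,b))).
      assert (Hs : forall a, P a -> M (a, epsilon (inhabits t0) (fun b => M (a,b)))).
      { intros a Ha; apply epsilon_spec; auto. }
      split.
      * intros a Ha; apply (G1 a); apply Hs; auto.
      * intros a a' Ha Ha' He. apply (G3 a a' (epsilon (inhabits t0) (fun b => M (a,b)))); auto.
        rewrite He; auto.
    + destruct (classic (forall b, Q b -> exists a, M (a,b))) as [HB|HB].
      * right. exists (fun b => epsilon (inhabits t0) (fun a => M (a,b))).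
        assert (Hs : forall b, Q b -> M (epsilon (inhabits t0) (fun a => M (a,b)), b)).
        { intros b Hb; apply epsilon_spec with (P := fun a => M (a,b)); auto. }
        split.
        -- intros b Hb; apply (G1 _ b); apply Hs; auto.
        -- intros b b' Hb Hb' He. apply (G2 (epsilon (inhabits t0) (fun a => M (a,b)))); auto.
           rewrite He; auto.
      * exfalso.
        apply not_all_ex_not in HA; destruct HA as [a HA].
        apply imply_to_and in HA; destruct HA as [Pa Na].
        apply not_all_ex_not in HB; destruct HB as [b HB].
        apply imply_to_and in HB; destruct HB as [Qb Nb].
        assert (Hin : incl_s (fun p => M p \/ p = (a,b)) M).
        { apply Hmax.
          - split; [|split].
            + intros x y [H|H]; [apply G1; auto| inversion H; subst; auto].
            + intros x y y' [H|H] [H'|H'].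
              * apply (G2 x); auto.
              * inversion H'; subst; exfalso; apply Na; eauto.
              * inversion H; subst; exfalso; apply Na; eauto.
              * inversion H; inversion H'; subst; auto.
            + intros x x' y [H|H] [H'|H'].
              * apply (G3 x x' y); auto.
              * inversion H'; subst; exfalso; apply Nb; eauto.
              * inversion H; subst; exfalso; apply Nb; eauto.
              * inversion H; inversion H'; subst; auto.
          - intros p h; left; auto. }
        apply Na; exists b; apply Hin; right; auto.
Qed.

Lemma infin_nat {T : Type} (P : T -> Prop) : infin P ->
  exists e : nat -> T, (forall n, P (e n)) /\ (forall n m, e n = e m -> n = m).
Proof.
  intros Hinf.
  set (pick := fun l => proj1_sig (constructive_indefinite_description _ (Hinf l))).
  assert (Hpick : forall l, P (pick l) /\ ~ In (pick l) l).
  { intro l; unfold pick; destruct (constructive_indefinite_description _ (Hinf l)); auto. }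
  set (h := fix h (n : nat) : list T := match n with 0 => nil | S n => pick (h n) :: h n end).
  exists (fun n => pick (h n)).
  assert (Hsub : forall n m, n < m -> In (pick (h n)) (h m)).
  { intros n m Hnm; induction m; [lia|].
    simpl. destruct (Nat.eq_dec n m) as [->|Hne]; [left; auto| right; apply IHm; lia]. }
  split; [intro; apply Hpick|].
  intros n m He.
  destruct (lt_eq_lt_dec n m) as [[H|H]|H]; auto.
  - exfalso; apply (proj2 (Hpick (h m))); rewrite <- He; apply Hsub; auto.
  - exfalso; apply (proj2 (Hpick (h n))); rewrite He; apply Hsub; auto.
Qed.


Definition hdom {T : Type} (G : (T*T)*T -> Prop) (x : T) := exists y z, G ((x,y),z).

Lemma hessenberg {T : Type} (t0 : T) (P : T -> Prop) : infin P -> exists F, pairing P F.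
Proof.
  intros Hinf.
  destruct (infin_nat P Hinf) as [e [eP einj]].
  set (cp := fun a b => Cantor.to_nat (a,b)).
  assert (cpinj : forall a b a' b', cp a b = cp a' b' -> a = a' /\ b = b').
  { intros a b a' b' H. assert (H2 := f_equal Cantor.of_nat H). unfold cp in H2.
    rewrite !Cantor.cancel_of_to in H2. inversion H2; auto. }
  set (Good := fun G : (T*T)*T -> Prop =>
    (forall x y z, G ((x,y),z) -> P x /\ P y /\ P z) /\
    (forall x y z z', G ((x,y),z) -> G ((x,y),z') -> z = z') /\
    (forall x y x' y' z, G ((x,y),z) -> G ((x',y'),z) -> x = x' /\ y = y') /\
    (forall x y, hdom G x -> hdom G y -> exists z, G ((x,y),z)) /\
    (forall x y z, G ((x,y),z) -> hdom G y /\ hdom G z)).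
  set (S0 := fun p : (T*T)*T => exists a b, p = ((e a, e b), e (cp a b))).
  destruct (zorn_sets Good S0) as [M [[G1 [G2 [G3 [G4 G5]]]] [HS0M Hmax]]].
  - split; [|split; [|split; [|split]]].
    + intros x y z [a [b H]]; inversion H; subst; auto.
    + intros x y z z' [a [b H]] [a' [b' H']]; inversion H; inversion H'; subst.
      apply einj in H4; apply einj in H5; subst; auto.
    + intros x y x' y' z [a [b H]] [a' [b' H']]; inversion H; inversion H'; subst.
      apply einj in H6; apply cpinj in H6; destruct H6; subst; auto.
    + intros x y [y1 [z1 [a [b H]]]] [y2 [z2 [a' [b' H']]]]; inversion H; inversion H'; subst.
      exists (e (cp a a')); exists a, a'; auto.
    + intros x y z [a [b H]]; inversion H; subst; split.
      * exists (e 0), (e (cp b 0)), b, 0; auto.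
      * exists (e 0), (e (cp (cp a b) 0)), (cp a b), 0; auto.
  - intros Ch HG Hc [Sx HSx].
    split; [|split; [|split; [|split]]].
    + intros x y z [S [HS H]]; apply (HG S HS); auto.
    + intros x y z z' [S [HS H]] [S' [HS' H']].
      destruct (Hc S S' HS HS') as [I|I].
      * apply (proj1 (proj2 (HG S' HS')) x y); auto.
      * apply (proj1 (proj2 (HG S HS)) x y); auto.
    + intros x y x' y' z [S [HS H]] [S' [HS' H']].
      destruct (Hc S S' HS HS') as [I|I].
      * apply (proj1 (proj2 (proj2 (HG S' HS'))) x y x' y' z); auto.
      * apply (proj1 (proj2 (proj2 (HG S HS))) x y x' y' z); auto.
    + intros x y [y1 [z1 [S [HS H]]]] [y2 [z2 [S' [HS' H']]]].
      destruct (Hc S S' HS HS') as [I|I].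
      * destruct (proj1 (proj2 (proj2 (proj2 (HG S' HS')))) x y) as [z Hz].
        -- exists y1, z1; apply I; auto.
        -- exists y2, z2; auto.
        -- exists z, S'; auto.
      * destruct (proj1 (proj2 (proj2 (proj2 (HG S HS)))) x y) as [z Hz].
        -- exists y1, z1; auto.
        -- exists y2, z2; apply I; auto.
        -- exists z, S; auto.
    + intros x y z [S [HS H]].
      destruct (proj2 (proj2 (proj2 (proj2 (HG S HS)))) x y z H) as [[a [b D1]] [c [d D2]]].
      split; [exists a, b, S | exists c, d, S]; auto.
  - set (S := hdom M).
    set (m := fun x y => epsilon (inhabits t0) (fun z => M ((x,y),z))).
    assert (Hm1 : forall x y, S x -> S y -> M ((x,y), m x y)).
    { intros x y Hx Hy; unfold m; apply epsilon_spec; apply G4; auto. }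
    assert (HMS : forall x y z, M ((x,y),z) -> S x /\ S y /\ S z /\ z = m x y).
    { intros x y z H. destruct (G5 _ _ _ H) as [H1 H2].
      assert (Sx : S x) by (exists y, z; auto).
      split; auto; split; auto; split; auto. apply (G2 x y); auto. }
    assert (Hm2 : forall x y, S x -> S y -> S (m x y)).
    { intros x y Hx Hy; apply (HMS x y); auto. }
    assert (Hm3 : forall x y x' y', S x -> S y -> S x' -> S y' -> m x y = m x' y' -> x = x' /\ y = y').
    { intros x y x' y' Hx Hy Hx' Hy' He. apply (G3 x y x' y' (m x y)); auto. rewrite He; auto. }
    assert (HSP : forall x, S x -> P x).
    { intros x [y [z H]]; apply (G1 x y z); auto. }
    assert (He : forall n, S (e n)).
    { intro n; exists (e 0), (e (cp n 0)); apply HS0M; exists n, 0; auto. }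
    set (R := fun x => P x /\ ~ S x).
    destruct (comparability t0 S R) as [[h [Hh1 Hh2]]|[g [Hg1 Hg2]]].
    + exfalso.
      set (M' := fun p : (T*T)*T => M p \/
         (exists a b, S a /\ S b /\ p = ((a, h b), h (m (e 0) (m a b)))) \/
         (exists a b, S a /\ S b /\ p = ((h a, b), h (m (e 1) (m a b)))) \/
         (exists a b, S a /\ S b /\ p = ((h a, h b), h (m (e 2) (m a b))))).
      assert (HnS : forall a, S a -> ~ S (h a)) by (intros a Ha; apply (Hh1 a Ha)).
      assert (HhP : forall a, S a -> P (h a)) by (intros a Ha; apply (Hh1 a Ha)).
      assert (HmS : forall i a b, S a -> S b -> S (m (e i) (m a b))) by (intros; apply Hm2; auto).
      assert (Hdom : forall x, hdom M' x -> S x \/ exists a, S a /\ x = h a).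
      { intros x [y [z [H|[[a [b [Ha [Hb H]]]]|[[a [b [Ha [Hb H]]]]|[a [b [Ha [Hb H]]]]]]]]].
        - left; exists y, z; auto.
        - inversion H; subst; left; auto.
        - inversion H; subst; right; eauto.
        - inversion H; subst; right; eauto. }
      assert (Hdom2 : forall x, S x -> hdom M' x).
      { intros x [y [z H]]; exists y, z; left; auto. }
      assert (Hdom3 : forall a, S a -> hdom M' (h a)).
      { intros a Ha; exists a, (h (m (e 1) (m a a))); right; right; left; exists a, a; auto. }
      assert (Hinc : incl_s M' M).
      { apply Hmax; [| intros p Hp; left; auto].
        split; [|split; [|split; [|split]]].
        - intros x y z [H|[[a [b [Ha [Hb H]]]]|[[a [b [Ha [Hb H]]]]|[a [b [Ha [Hb H]]]]]]].
          + apply G1; auto.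
          + inversion H; subst; split; [|split]; eauto.
          + inversion H; subst; split; [|split]; eauto.
          + inversion H; subst; split; [|split]; eauto.
        - intros x y z z' [H|[[a [b [Ha [Hb H]]]]|[[a [b [Ha [Hb H]]]]|[a [b [Ha [Hb H]]]]]]] [H'|[[a' [b' [Ha' [Hb' H']]]]|[[a' [b' [Ha' [Hb' H']]]]|[a' [b' [Ha' [Hb' H']]]]]]];
            try (apply (G2 x y); assumption);
            repeat match goal with Hq : (_,_) = (_,_) |- _ => inversion Hq; clear Hq end; subst;
            repeat match goal with Hm : M ((_,_),_) |- _ => apply HMS in Hm; destruct Hm as [? [? [? ?]]] end;
            try solve [exfalso; match goal with H1 : S (h ?c) |- _ => apply (HnS c); auto end];
            repeat match goal with Hq : h ?u = h ?v |- _ => apply Hh2 in Hq; [subst|auto|auto] end;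
            try reflexivity.
        - intros x y x' y' z [H|[[a [b [Ha [Hb H]]]]|[[a [b [Ha [Hb H]]]]|[a [b [Ha [Hb H]]]]]]] [H'|[[a' [b' [Ha' [Hb' H']]]]|[[a' [b' [Ha' [Hb' H']]]]|[a' [b' [Ha' [Hb' H']]]]]]];
            try (apply (G3 x y x' y' z); assumption);
            repeat match goal with Hq : (_,_) = (_,_) |- _ => inversion Hq; clear Hq end; subst;
            repeat match goal with Hm : M ((_,_),_) |- _ => apply HMS in Hm; destruct Hm as [? [? [? ?]]] end;
            try solve [exfalso; match goal with H1 : S (h ?c) |- _ => apply (HnS c); auto end];
            repeat match goal with Hq : h ?u = h ?v |- _ => apply Hh2 in Hq; [subst|auto|auto] end;
            repeat match goal with Hq : m ?u1 ?u2 = m ?v1 ?v2 |- _ => apply Hm3 in Hq; [destruct Hq; subst|auto|auto|auto|auto] end;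
            repeat match goal with Hq : e ?u = e ?v |- _ => apply einj in Hq; try discriminate; subst end;
            try (split; reflexivity).
        - intros x y Dx Dy.
          destruct (Hdom x Dx) as [Sx|[a [Sa ->]]]; destruct (Hdom y Dy) as [Sy|[b [Sb ->]]].
          + exists (m x y); left; auto.
          + eexists; right; left; exists x, b; eauto.
          + eexists; right; right; left; exists a, y; eauto.
          + eexists; right; right; right; exists a, b; eauto.
        - intros x y z [H|[[a [b [Ha [Hb H]]]]|[[a [b [Ha [Hb H]]]]|[a [b [Ha [Hb H]]]]]]];
            try (inversion H; subst; clear H).
          + destruct (HMS _ _ _ H) as [_ [? [? _]]]; auto.
          + split; apply Hdom3; auto.
          + split; [apply Hdom2|apply Hdom3]; auto.
          + split; apply Hdom3; auto. }
      assert (Hc : M ((e 0, h (e 0)), h (m (e 0) (m (e 0) (e 0))))).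
      { apply Hinc; right; left; exists (e 0), (e 0); auto. }
      destruct (HMS _ _ _ Hc) as [_ [Hs _]]. eapply HnS; [apply He|]; eauto.
    + set (f := fun x => if excluded_middle_informative (S x) then m (e 0) x else m (e 1) (g x)).
      assert (Hf1 : forall x, P x -> S (f x)).
      { intros x Px; unfold f; destruct (excluded_middle_informative (S x)); auto.
        apply Hm2; auto; apply Hg1; split; auto. }
      assert (Hf2 : forall x y, P x -> P y -> f x = f y -> x = y).
      { intros x y Px Py; unfold f.
        destruct (excluded_middle_informative (S x)) as [Sx|Sx];
        destruct (excluded_middle_informative (S y)) as [Sy|Sy]; intro Hq;
        (apply Hm3 in Hq; [|auto|auto|auto|auto]);
        try (apply Hg1; split; auto; fail);
        destruct Hq as [Hq1 Hq2]; try (apply einj in Hq1; discriminate); auto.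
        apply Hg2; auto; split; auto. }
      exists (fun x y => m (f x) (f y)); split.
      * intros x y Px Py; apply HSP; auto.
      * intros x y x' y' Px Py Px' Py' Hq. apply Hm3 in Hq; auto.
        destruct Hq; split; auto.
Qed.


Open Scope R_scope.


Lemma vadd0l (X : Banach) (x : X) : vadd vzero x = x.
Proof. rewrite vaddC; apply vadd0. Qed.

Lemma vaddNl (X : Banach) (x : X) : vadd (vopp x) x = vzero.
Proof. rewrite vaddC; apply vaddN. Qed.

Lemma vadd_cancel (X : Banach) (a b c : X) : vadd a b = vadd a c -> b = c.
Proof.
  intro H. assert (H2 := f_equal (vadd (vopp a)) H).
  rewrite !vaddA, !vaddNl, !vadd0l in H2; auto.
Qed.

Lemma vscal0 (X : Banach) (x : X) : vscal 0 x = vzero.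
Proof.
  apply (vadd_cancel X (vscal 0 x)). rewrite vadd0, <- vscalDl. f_equal; ring.
Qed.

Lemma vscal_m1 (X : Banach) (x : X) : vscal (-1) x = vopp x.
Proof.
  apply (vadd_cancel X x). rewrite vaddN. rewrite <- (vscal1 X x) at 1.
  rewrite <- vscalDl. replace (1 + -1) with 0 by ring. apply vscal0.
Qed.

Lemma vscal_zero (X : Banach) (a : R) : vscal a (@vzero X) = vzero.
Proof. rewrite <- (vscal0 X vzero), vscalA, Rmult_0_r; reflexivity. Qed.

Lemma vopp_scal (X : Banach) (a : R) (x : X) : vopp (vscal a x) = vscal (-a) x.
Proof. rewrite <- vscal_m1, vscalA; f_equal; ring. Qed.

Lemma vscal_opp (X : Banach) (a : R) (x : X) : vscal a (vopp x) = vscal (-a) x.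
Proof. rewrite <- vscal_m1, vscalA; f_equal; ring. Qed.

Lemma vopp_add (X : Banach) (x y : X) : vopp (vadd x y) = vadd (vopp x) (vopp y).
Proof. rewrite <- !vscal_m1, vscalDr; auto. Qed.

Lemma vopp_opp (X : Banach) (x : X) : vopp (vopp x) = x.
Proof. rewrite <- !vscal_m1, vscalA. replace (-1 * -1) with 1 by ring. apply vscal1. Qed.

Lemma vnorm0 (X : Banach) : vnorm (@vzero X) = 0.
Proof. rewrite <- (vscal0 X vzero), vnorm_scal, Rabs_R0; ring. Qed.

Lemma vnorm_opp (X : Banach) (x : X) : vnorm (vopp x) = vnorm x.
Proof. rewrite <- vscal_m1, vnorm_scal. replace (Rabs (-1)) with 1; [ring|]. rewrite Rabs_left; lra. Qed.

Lemma vadd_swap (X : Banach) (a b c d : X) : vadd (vadd a b) (vadd c d) = vadd (vadd a c) (vadd b d).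
Proof.
  rewrite <- !vaddA; f_equal. rewrite !vaddA; f_equal; apply vaddC.
Qed.

Lemma dist_self (X : Banach) (x : X) : Defs.dist X x x = 0.
Proof. unfold Defs.dist; rewrite vaddN; apply vnorm0. Qed.

Lemma dist_sym (X : Banach) (x y : X) : Defs.dist X x y = Defs.dist X y x.
Proof.
  unfold Defs.dist. rewrite <- vnorm_opp, vopp_add, vopp_opp, vaddC; auto.
Qed.

Lemma dist_ge0 (X : Banach) (x y : X) : 0 <= Defs.dist X x y.
Proof. apply vnorm_ge0. Qed.

Lemma dist_tri (X : Banach) (x y z : X) : Defs.dist X x z <= Defs.dist X x y + Defs.dist X y z.
Proof.
  unfold Defs.dist. replace (vadd x (vopp z)) with (vadd (vadd x (vopp y)) (vadd y (vopp z))).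
  - apply vnorm_tri.
  - rewrite <- !vaddA. f_equal. rewrite vaddA, vaddNl, vadd0l; auto.
Qed.

Lemma dist_eq0 (X : Banach) (x y : X) : Defs.dist X x y = 0 -> x = y.
Proof.
  unfold Defs.dist; intro H; apply vnorm_eq0 in H.
  assert (H2 := f_equal (fun z => vadd z y) H). simpl in H2.
  rewrite <- vaddA, vaddNl, vadd0, vadd0l in H2; auto.
Qed.

Lemma dist_0r (X : Banach) (x : X) : Defs.dist X x vzero = vnorm x.
Proof. unfold Defs.dist. rewrite <- vscal_m1, vscal_zero, vadd0; auto. Qed.

Lemma dist_add (X : Banach) (x y x' y' : X) :
  Defs.dist X (vadd x y) (vadd x' y') <= Defs.dist X x x' + Defs.dist X y y'.
Proof.
  unfold Defs.dist. rewrite vopp_add, vadd_swap. apply vnorm_tri.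
Qed.

Lemma dist_scal (X : Banach) (a : R) (x y : X) : Defs.dist X (vscal a x) (vscal a y) = Rabs a * Defs.dist X x y.
Proof.
  unfold Defs.dist. rewrite vopp_scal, <- vscal_opp, <- vscalDr, vnorm_scal; auto.
Qed.

Lemma dist_scal2 (X : Banach) (a b : R) (x : X) : Defs.dist X (vscal a x) (vscal b x) = Rabs (a - b) * vnorm x.
Proof.
  unfold Defs.dist. rewrite vopp_scal, <- vscalDl, vnorm_scal; auto.
Qed.

Lemma norm_dist (X : Banach) (x y : X) : vnorm x <= vnorm y + Defs.dist X x y.
Proof.
  rewrite <- !dist_0r. rewrite Rplus_comm. apply dist_tri.
Qed.

Lemma norm_dist2 (X : Banach) (x y : X) : Rabs (vnorm x - vnorm y) <= Defs.dist X x y.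
Proof.
  assert (H1 := norm_dist X x y). assert (H2 := norm_dist X y x). rewrite dist_sym in H2.
  apply Rabs_le; lra.
Qed.

Lemma lin_zero (X : Banach) (T : X -> X) : linear_map X T -> T vzero = vzero.
Proof.
  intros [_ H]. transitivity (T (vscal 0 vzero)); [rewrite vscal0; auto|].
  rewrite H, vscal0; auto.
Qed.

Lemma lin_opp (X : Banach) (T : X -> X) x : linear_map X T -> T (vopp x) = vopp (T x).
Proof.
  intros [_ H]. rewrite <- !vscal_m1, H; auto.
Qed.

Lemma rot_dist (X : Banach) (T : X -> X) x y : rotation X T -> Defs.dist X (T x) (T y) = Defs.dist X x y.
Proof.
  intros [HL [Hn _]]. unfold Defs.dist. rewrite <- lin_opp, <- (proj1 HL); auto.
Qed.


Definition unitv (X : Banach) (p : X) : X := vscal (/ vnorm p) p.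
Definition wpt (X : Banach) (r : X) : X := vscal (/ Rmax 1 (vnorm r)) r.

Definition combT (X : Banach) (l : list (R * (X -> X))) (y : X) : X :=
  comb X (map (fun q => (fst q, snd q y)) l).

Definition phi_spec (X : Banach) (G0 : (X -> X) -> Prop) (p r : X) (k : nat)
  (l : list (R * (X -> X))) : Prop :=
  l <> nil /\ Forall (fun q => 0 <= fst q /\ G0 (snd q)) l /\
  fold_right Rplus 0 (map fst l) = 1 /\
  Defs.dist X (combT X l (unitv X p)) (wpt X r) < / (INR k + 1).

Definition phi (X : Banach) (G0 : (X -> X) -> Prop) (p r : X) (k : nat) : list (R * (X -> X)) :=
  epsilon (inhabits nil) (fun l => p <> vzero -> phi_spec X G0 p r k l).

Definition psi (X : Banach) (C : X -> Prop) (p : X) (k : nat) : X :=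
  epsilon (inhabits vzero) (fun c => p <> vzero -> C c /\ Defs.dist X (unitv X p) c < / (INR k + 1)).

Definition invT (X : Banach) (G0 : (X -> X) -> Prop) (T : X -> X) : X -> X :=
  epsilon (inhabits (fun x : X => x)) (fun S => G0 T -> G0 S /\ (forall x, S (T x) = x) /\ (forall x, T (S x) = x)).

Definition nthT (X : Banach) (G0 : (X -> X) -> Prop) (b c : X) (j i : nat) : X -> X :=
  nth i (map snd (phi X G0 b c j)) (fun x => x).

Definition op (X : Banach) (G0 : (X -> X) -> Prop) (C : X -> Prop) (t i j k : nat) (a b c : X) : X :=
  match t with
  | 0 => a
  | 1 => vadd a b
  | 2 => vscal ((INR i - INR j) / (INR k + 1)) a
  | 3 => nthT X G0 b c j i a
  | 4 => invT X G0 (nthT X G0 b c j i) a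
  | _ => psi X C a i
  end.

Fixpoint stage (X : Banach) (G0 : (X -> X) -> Prop) (C : X -> Prop) (S0 : X -> Prop) (n : nat) : X -> Prop :=
  match n with
  | 0 => S0
  | S n => fun x => exists t i j k a b c, stage X G0 C S0 n a /\ stage X G0 C S0 n b /\
              stage X G0 C S0 n c /\ x = op X G0 C t i j k a b c
  end.

Definition Wset (X : Banach) G0 C S0 (x : X) : Prop := exists n, stage X G0 C S0 n x.

Lemma norm_pos (X : Banach) (p : X) : p <> vzero -> 0 < vnorm p.
Proof.
  intro H. destruct (vnorm_ge0 X p) as [H1|H1]; auto. exfalso; apply H; apply vnorm_eq0; auto.
Qed.

Lemma unitv_norm (X : Banach) (p : X) : p <> vzero -> vnorm (unitv X p) = 1.
Proof.
  intro H. assert (H1 := norm_pos X p H). unfold unitv. rewrite vnorm_scal.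
  rewrite Rabs_right; [field; lra|]. left; apply Rinv_0_lt_compat; auto.
Qed.

Lemma unitv_dist (X : Banach) (p : X) : p <> vzero -> Defs.dist X p (unitv X p) = Rabs (vnorm p - 1).
Proof.
  intro H. assert (H1 := norm_pos X p H). unfold unitv.
  rewrite <- (vscal1 X p) at 1. rewrite dist_scal2.
  replace (1 - / vnorm p) with ((vnorm p - 1) / vnorm p) by (field; lra).
  unfold Rdiv; rewrite Rabs_mult, Rabs_Rinv by lra. rewrite (Rabs_right (vnorm p)) by lra.
  field; lra.
Qed.

Lemma wpt_norm (X : Banach) (r : X) : vnorm (wpt X r) <= 1.
Proof.
  unfold wpt. rewrite vnorm_scal. assert (H := Rmax_l 1 (vnorm r)). assert (H2 := Rmax_r 1 (vnorm r)).
  rewrite Rabs_right by (left; apply Rinv_0_lt_compat; lra).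
  apply (Rmult_le_reg_l (Rmax 1 (vnorm r))); [lra|].
  rewrite <- Rmult_assoc, Rinv_r by lra. lra.
Qed.

Lemma dist_scal_1 (X : Banach) (a : R) (x : X) : Defs.dist X (vscal a x) x = Rabs (a - 1) * vnorm x.
Proof. transitivity (Defs.dist X (vscal a x) (vscal 1 x)); [rewrite vscal1; auto| apply dist_scal2]. Qed.

Lemma wpt_dist (X : Banach) (r z : X) : vnorm z <= 1 -> Defs.dist X (wpt X r) z <= 2 * Defs.dist X r z.
Proof.
  intro Hz. unfold wpt. unfold Rmax. destruct (Rle_dec 1 (vnorm r)) as [H|H].
  - assert (Hd := norm_dist X r z).
    assert (Hn : 0 < vnorm r) by lra.
    assert (E : Defs.dist X (vscal (/ vnorm r) r) r = vnorm r - 1).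
    { rewrite dist_scal_1.
      replace (/ vnorm r - 1) with (- ((vnorm r - 1) / vnorm r)) by (field; lra).
      rewrite Rabs_Ropp. unfold Rdiv; rewrite Rabs_mult, Rabs_Rinv by lra.
      rewrite (Rabs_right (vnorm r)) by lra. rewrite Rabs_right by lra. field; lra. }
    assert (T := dist_tri X (vscal (/ vnorm r) r) r z). lra.
  - rewrite Rinv_1, vscal1. assert (0 <= Defs.dist X r z) by apply dist_ge0. lra.
Qed.

Lemma orbit_lift (X : Banach) (G0 : (X -> X) -> Prop) (u : X) (l : list (R * X)) :
  Forall (fun q => 0 <= fst q /\ orbit X G0 u (snd q)) l ->
  exists l' : list (R * (X -> X)), map (fun q => (fst q, snd q u)) l' = l /\
     Forall (fun q => 0 <= fst q /\ G0 (snd q)) l'.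
Proof.
  induction l as [|[a x] l IH]; intro H.
  - exists nil; auto.
  - inversion H; subst. destruct H2 as [Ha [T [HT HTx]]]. destruct (IH H3) as [l' [E F]].
    exists ((a,T) :: l'); simpl; split.
    + rewrite E, HTx; auto.
    + constructor; auto.
Qed.

Lemma phi_ok (X : Banach) (G0 : (X -> X) -> Prop) (p r : X) (k : nat) :
  convex_transitive X G0 -> p <> vzero -> phi_spec X G0 p r k (phi X G0 p r k).
Proof.
  intros Hct Hp. unfold phi.
  apply (epsilon_spec (inhabits nil) (fun l => p <> vzero -> phi_spec X G0 p r k l)); [|exact Hp].
  assert (Hu : sphere X (unitv X p)) by (apply unitv_norm; auto).
  assert (Hw : ball1 X (wpt X r)) by apply wpt_norm.
  destruct (proj2 (Hct _ Hu (wpt X r)) Hw (/ (INR k + 1))) as [v [[l [Hne [HF [Hs Hc]]]] Hd]].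
  { apply Rinv_0_lt_compat. assert (0 <= INR k) by apply pos_INR. lra. }
  destruct (orbit_lift X G0 _ l HF) as [l' [E F]].
  exists l'. intros _. split; [|split; [|split]].
  - intro; subst; apply Hne; auto.
  - auto.
  - rewrite <- Hs, <- E, map_map; simpl; auto.
  - unfold combT. rewrite E, Hc, dist_sym. auto.
Qed.

Lemma psi_ok (X : Banach) (C : X -> Prop) (p : X) (k : nat) :
  dense_in X C (sphere X) -> p <> vzero ->
  C (psi X C p k) /\ Defs.dist X (unitv X p) (psi X C p k) < / (INR k + 1).
Proof.
  intros HC Hp. unfold psi. apply (epsilon_spec (inhabits vzero) (fun c => p <> vzero -> C c /\ Defs.dist X (unitv X p) c < / (INR k + 1))); [|exact Hp].
  destruct (HC (unitv X p) (unitv_norm X p Hp) (/ (INR k + 1))) as [c [Hc Hd]].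
  { apply Rinv_0_lt_compat. assert (0 <= INR k) by apply pos_INR. lra. }
  exists c; auto.
Qed.

Lemma invT_ok (X : Banach) (G0 : (X -> X) -> Prop) (T : X -> X) :
  rot_subgroup X G0 -> G0 T ->
  G0 (invT X G0 T) /\ (forall x, invT X G0 T (T x) = x) /\ (forall x, T (invT X G0 T x) = x).
Proof.
  intros [_ [_ [_ Hinv]]] HT. unfold invT.
  apply (epsilon_spec (inhabits (fun x : X => x)) (fun S => G0 T -> G0 S /\ (forall x, S (T x) = x) /\ (forall x, T (S x) = x))); [|exact HT].
  destruct (Hinv T HT) as [S HS]; exists S; auto.
Qed.


Lemma IZR_nat_diff (m : Z) : IZR m = INR (Z.to_nat m) - INR (Z.to_nat (- m)).
Proof.
  destruct m as [|p|p]; simpl.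
  - ring.
  - rewrite INR_IPR. unfold IZR. ring.
  - rewrite INR_IPR. unfold IZR. ring.
Qed.

Lemma ratapprox (a d : R) : 0 < d -> exists i j k : nat,
  Rabs (a - (INR i - INR j) / (INR k + 1)) < d.
Proof.
  intro Hd. destruct (archimed_cor1 d Hd) as [N [HN HN0]].
  assert (HNr : 0 < INR N) by (apply lt_0_INR; auto).
  destruct (archimed (a * INR N)) as [H1 H2].
  exists (Z.to_nat (up (a * INR N))), (Z.to_nat (- up (a * INR N))), (pred N).
  rewrite <- IZR_nat_diff.
  replace (INR (pred N) + 1) with (INR N) by (rewrite <- S_INR; f_equal; lia).
  apply Rle_lt_trans with (/ INR N); auto.
  replace (a - IZR (up (a * INR N)) / INR N) with (- ((IZR (up (a * INR N)) - a * INR N) / INR N))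
    by (field; lra).
  rewrite Rabs_Ropp. unfold Rdiv. rewrite Rabs_mult, Rabs_inv, (Rabs_right (INR N)) by lra.
  rewrite Rabs_right by lra.
  rewrite <- (Rmult_1_l (/ INR N)) at 2.
  apply Rmult_le_compat_r; [left; apply Rinv_0_lt_compat; auto| lra].
Qed.

Lemma stage_S (X : Banach) G0 C S0 n (x : X) : stage X G0 C S0 n x -> stage X G0 C S0 (S n) x.
Proof. intro H; exists 0%nat, 0%nat, 0%nat, 0%nat, x, x, x; auto. Qed.

Lemma stage_le (X : Banach) G0 C S0 n m (x : X) : (n <= m)%nat -> stage X G0 C S0 n x -> stage X G0 C S0 m x.
Proof. intros H; induction H; auto. intro; apply stage_S; auto. Qed.

Lemma W_op (X : Banach) G0 C S0 t i j k (a b c : X) :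
  Wset X G0 C S0 a -> Wset X G0 C S0 b -> Wset X G0 C S0 c -> Wset X G0 C S0 (op X G0 C t i j k a b c).
Proof.
  intros [n1 H1] [n2 H2] [n3 H3]. exists (S (n1 + n2 + n3)).
  exists t, i, j, k, a, b, c; split; [|split; [|split]]; auto.
  - apply (stage_le _ _ _ _ n1); [lia|auto].
  - apply (stage_le _ _ _ _ n2); [lia|auto].
  - apply (stage_le _ _ _ _ n3); [lia|auto].
Qed.

Lemma W_S0 (X : Banach) G0 C S0 (x : X) : S0 x -> Wset X G0 C S0 x.
Proof. intro; exists 0%nat; auto. Qed.

Lemma W_add (X : Banach) G0 C S0 (a b : X) :
  Wset X G0 C S0 a -> Wset X G0 C S0 b -> Wset X G0 C S0 (vadd a b).
Proof. intros; apply (W_op X G0 C S0 1 0 0 0 a b a); auto. Qed.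

Lemma W_scal (X : Banach) G0 C S0 i j k (a : X) :
  Wset X G0 C S0 a -> Wset X G0 C S0 (vscal ((INR i - INR j) / (INR k + 1)) a).
Proof. intros; apply (W_op X G0 C S0 2 i j k a a a); auto. Qed.

Lemma W_psi (X : Banach) G0 C S0 i (a : X) :
  Wset X G0 C S0 a -> Wset X G0 C S0 (psi X C a i).
Proof. intros; apply (W_op X G0 C S0 5 i 0 0 a a a); auto. Qed.

Definition SelT (X : Banach) G0 C S0 (T : X -> X) : Prop :=
  exists b c j a, b <> vzero /\ Wset X G0 C S0 b /\ Wset X G0 C S0 c /\ In (a, T) (phi X G0 b c j).

Lemma W_T (X : Banach) G0 C S0 (T : X -> X) (x : X) :
  SelT X G0 C S0 T -> Wset X G0 C S0 x ->
  Wset X G0 C S0 (T x) /\ Wset X G0 C S0 (invT X G0 T x).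
Proof.
  intros [b [c [j [a [_ [Hb [Hc Hin]]]]]]] Hx.
  assert (Hin2 : In T (map snd (phi X G0 b c j))).
  { change T with (snd (a, T)); apply in_map; auto. }
  destruct (In_nth _ _ (fun x : X => x) Hin2) as [i [_ Hi]].
  split.
  - assert (H := W_op X G0 C S0 3 i j 0 x b c Hx Hb Hc). simpl in H. unfold nthT in H. rewrite Hi in H; auto.
  - assert (H := W_op X G0 C S0 4 i j 0 x b c Hx Hb Hc). simpl in H. unfold nthT in H. rewrite Hi in H; auto.
Qed.

Lemma W_zero (X : Banach) G0 C S0 (s : X) : S0 s -> Wset X G0 C S0 vzero.
Proof.
  intro Hs. assert (H := W_scal X G0 C S0 0 0 0 s (W_S0 _ _ _ _ _ Hs)).
  replace ((INR 0 - INR 0) / (INR 0 + 1)) with 0 in H by (simpl; field). rewrite vscal0 in H; auto.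
Qed.

Lemma closure_incl (X : Banach) (S : X -> Prop) x : S x -> closure X S x.
Proof. intros H e He; exists x; split; auto; rewrite dist_self; auto. Qed.

Lemma closure_closed (X : Banach) (S : X -> Prop) x : closure X (closure X S) x -> closure X S x.
Proof.
  intros H e He. destruct (H (e/2)) as [y [Hy Hd]]; [lra|].
  destruct (Hy (e/2)) as [z [Hz Hd2]]; [lra|].
  exists z; split; auto. assert (T := dist_tri X x y z); lra.
Qed.

Lemma closure_add (X : Banach) (S : X -> Prop) :
  (forall a b, S a -> S b -> S (vadd a b)) ->
  forall x y, closure X S x -> closure X S y -> closure X S (vadd x y).
Proof.
  intros HS x y Hx Hy e He.
  destruct (Hx (e/2)) as [a [Ha Hda]]; [lra|]. destruct (Hy (e/2)) as [b [Hb Hdb]]; [lra|].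
  exists (vadd a b); split; auto. assert (T := dist_add X x y a b); lra.
Qed.

Lemma closure_scal (X : Banach) (S : X -> Prop) :
  (forall i j k a, S a -> S (vscal ((INR i - INR j) / (INR k + 1)) a)) ->
  forall r x, closure X S x -> closure X S (vscal r x).
Proof.
  intros HS r x Hx e He.
  assert (Hr : 0 < 4 * (Rabs r + 1)) by (assert (0 <= Rabs r) by apply Rabs_pos; lra).
  destruct (Hx (e / (4 * (Rabs r + 1)))) as [w [Hw Hdw]]; [apply Rdiv_lt_0_compat; lra|].
  assert (Hn : 0 < 4 * (vnorm w + 1)) by (assert (0 <= vnorm w) by apply vnorm_ge0; lra).
  destruct (ratapprox r (e / (4 * (vnorm w + 1)))) as [i [j [k Hq]]]; [apply Rdiv_lt_0_compat; lra|].
  exists (vscal ((INR i - INR j) / (INR k + 1)) w); split; auto.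
  assert (T := dist_tri X (vscal r x) (vscal r w) (vscal ((INR i - INR j) / (INR k + 1)) w)).
  rewrite dist_scal in T. rewrite dist_scal2 in T.
  assert (E1 : Rabs r * Defs.dist X x w <= Rabs r * (e / (4 * (Rabs r + 1)))).
  { apply Rmult_le_compat_l; [apply Rabs_pos| lra]. }
  assert (E2 : Rabs r * (e / (4 * (Rabs r + 1))) <= e / 4).
  { unfold Rdiv. apply (Rmult_le_reg_r (4 * (Rabs r + 1))); auto.
    rewrite !Rmult_assoc, Rinv_l by lra. assert (0 <= Rabs r) by apply Rabs_pos. nra. }
  assert (E3 : Rabs (r - (INR i - INR j) / (INR k + 1)) * vnorm w <= (e / (4 * (vnorm w + 1))) * vnorm w).
  { apply Rmult_le_compat_r; [apply vnorm_ge0| lra]. }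
  assert (E4 : (e / (4 * (vnorm w + 1))) * vnorm w <= e / 4).
  { unfold Rdiv. apply (Rmult_le_reg_r (4 * (vnorm w + 1))); auto.
    replace (e * / (4 * (vnorm w + 1)) * vnorm w * (4 * (vnorm w + 1))) with
      (e * vnorm w * (/ (4 * (vnorm w + 1)) * (4 * (vnorm w + 1)))) by ring.
    rewrite Rinv_l by lra. assert (0 <= vnorm w) by apply vnorm_ge0. nra. }
  lra.
Qed.


Definition Yset (X : Banach) G0 C S0 : X -> Prop := closure X (Wset X G0 C S0).

Lemma Y_subspace (X : Banach) G0 C S0 (s : X) : S0 s -> closed_subspace X (Yset X G0 C S0).
Proof.
  intro Hs. unfold Yset. split; [|split; [|split]].
  - apply closure_incl. eapply W_zero; eauto.
  - apply closure_add. apply W_add.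
  - intros a x; apply closure_scal. apply W_scal.
  - apply closure_closed.
Qed.

Lemma comb_norm (X : Banach) (l : list (R * X)) :
  Forall (fun q => 0 <= fst q /\ vnorm (snd q) <= 1) l ->
  vnorm (comb X l) <= fold_right Rplus 0 (map fst l).
Proof.
  induction l as [|[a x] l IH]; intro H; simpl.
  - rewrite vnorm0; lra.
  - inversion H; subst. simpl in H2. destruct H2 as [Ha Hx].
    assert (T := vnorm_tri X (vscal a x) (comb X l)). rewrite vnorm_scal, Rabs_right in T by lra.
    assert (I := IH H3). nra.
Qed.

Lemma combT_dist (X : Banach) (G0 : (X -> X) -> Prop) (l : list (R * (X -> X))) (y u : X) :
  (forall T, G0 T -> rotation X T) ->
  Forall (fun q => 0 <= fst q /\ G0 (snd q)) l ->
  Defs.dist X (combT X l y) (combT X l u) <= fold_right Rplus 0 (map fst l) * Defs.dist X y u.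
Proof.
  intros Hrot; induction l as [|[a T] l IH]; intro H; unfold combT in *; simpl.
  - rewrite dist_self; lra.
  - inversion H; subst. simpl in H2. destruct H2 as [Ha HT].
    assert (D := dist_add X (vscal a (T y)) (comb X (map (fun q => (fst q, snd q y)) l))
                   (vscal a (T u)) (comb X (map (fun q => (fst q, snd q u)) l))).
    rewrite dist_scal, rot_dist, Rabs_right in D by (auto; lra).
    assert (I := IH H3). lra.
Qed.

Lemma Sel_restr (X : Banach) G0 C S0 (T : X -> X) :
  rot_subgroup X G0 -> convex_transitive X G0 ->
  SelT X G0 C S0 T -> restr_group X G0 (Yset X G0 C S0) T.
Proof.
  intros Hrot Hct HS.
  assert (HG : G0 T).
  { destruct HS as [b [c [j [a [Hb [_ [_ Hin]]]]]]].
    destruct (phi_ok X G0 b c j Hct Hb) as [_ [HF _]].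
    rewrite Forall_forall in HF. apply (HF _ Hin). }
  destruct (invT_ok X G0 T Hrot HG) as [HGi [Hi1 Hi2]].
  assert (Hr1 := proj1 Hrot T HG). assert (Hr2 := proj1 Hrot _ HGi).
  split; auto. split.
  - intros y Hy e He. destruct (Hy e He) as [w [Hw Hd]].
    exists (T w); split; [apply W_T; auto|]. rewrite rot_dist; auto.
  - intros y Hy. exists (invT X G0 T y); split; auto.
    intros e He. destruct (Hy e He) as [w [Hw Hd]].
    exists (invT X G0 T w); split; [apply W_T; auto|]. rewrite rot_dist; auto.
Qed.

Lemma small_k (e : R) : 0 < e -> exists k : nat, / (INR k + 1) < e.
Proof.
  intro He. destruct (archimed_cor1 e He) as [N [HN HN0]]. exists N.
  assert (0 < INR N) by (apply lt_0_INR; auto).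
  apply Rle_lt_trans with (/ INR N); auto. apply Rinv_le_contravar; lra.
Qed.

Lemma near_unit (X : Banach) (y p : X) : vnorm y = 1 -> Defs.dist X y p < 1 ->
  p <> vzero /\ Defs.dist X y (unitv X p) <= 2 * Defs.dist X y p.
Proof.
  intros Hy Hd.
  assert (Hp : p <> vzero).
  { intro; subst. rewrite dist_0r in Hd. lra. }
  split; auto.
  assert (T := dist_tri X y p (unitv X p)). rewrite unitv_dist in T by auto.
  assert (N := norm_dist2 X p y). rewrite dist_sym, Hy in N. lra.
Qed.

Lemma Y_ct (X : Banach) G0 C S0 :
  rot_subgroup X G0 -> convex_transitive X G0 ->
  convex_transitive_sub X G0 (Yset X G0 C S0).
Proof.
  intros Hrot Hct y Hy Hsy z. split.
  - intros [Hz Hcl]. split; auto. unfold ball1.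
    apply Rnot_lt_le; intro Hlt.
    destruct (Hcl (vnorm z - 1)) as [v [[l [Hne [HF [Hs Hc]]]] Hd]]; [lra|].
    assert (Hv : vnorm v <= 1).
    { rewrite <- Hc, <- Hs. apply comb_norm. rewrite Forall_forall in *.
      intros q Hq. destruct (HF q Hq) as [Ha [T [[HT _] HTy]]]. split; auto.
      rewrite <- HTy. destruct (proj1 Hrot T HT) as [_ [Hn _]]. rewrite Hn. unfold sphere in Hsy; lra. }
    assert (N := norm_dist X z v). lra.
  - intros [Hz Hb]. split; auto. intros e He.
    set (d := Rmin (e / 8) (1/2)).
    assert (Hd0 : 0 < d) by (unfold d; apply Rmin_pos; lra).
    assert (Hd1 : d <= e / 8) by apply Rmin_l. assert (Hd2 : d <= 1/2) by apply Rmin_r.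
    destruct (Hy d Hd0) as [p [Hp Hdp]]. destruct (Hz d Hd0) as [r [Hr Hdr]].
    destruct (small_k (e/2)) as [k Hk]; [lra|].
    destruct (near_unit X y p Hsy) as [Hp0 Hu]; [lra|].
    destruct (phi_ok X G0 p r k Hct Hp0) as [Hne [HF [Hs Hc]]].
    exists (combT X (phi X G0 p r k) y). split.
    + exists (map (fun q => (fst q, snd q y)) (phi X G0 p r k)). split; [|split; [|split]].
      * intro E. apply Hne. destruct (phi X G0 p r k); auto; discriminate.
      * rewrite Forall_forall in *. intros q Hq. apply in_map_iff in Hq.
        destruct Hq as [[a T] [Eq Hin]]. subst q; simpl.
        destruct (HF _ Hin) as [Ha HT]. split; auto.
        exists T; split; auto. apply (Sel_restr X G0 C S0 T Hrot Hct).
        exists p, r, k, a; auto.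
      * rewrite map_map; simpl; auto.
      * reflexivity.
    + assert (D1 := combT_dist X G0 (phi X G0 p r k) y (unitv X p) (proj1 Hrot) HF).
      rewrite Hs in D1.
      assert (D2 := wpt_dist X r z Hb).
      set (v := combT X (phi X G0 p r k) y) in *.
      set (cu := combT X (phi X G0 p r k) (unitv X p)) in *.
      assert (T1 := dist_tri X z (wpt X r) v).
      assert (T2 := dist_tri X (wpt X r) cu v).
      assert (E1 := dist_sym X z (wpt X r)). assert (E2 := dist_sym X cu (wpt X r)).
      assert (E3 := dist_sym X r z).
      assert (E4 := dist_sym X v cu). lra.
Qed.

Lemma Y_Cdense (X : Banach) G0 C S0 :
  (forall x, C x -> sphere X x) -> dense_in X C (sphere X) ->
  dense_in X (fun x => C x /\ Yset X G0 C S0 x /\ sphere X x) (fun y => Yset X G0 C S0 y /\ sphere X y).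
Proof.
  intros HCs HCd y [Hy Hsy] e He.
  set (d := Rmin (e / 4) (1/2)).
  assert (Hd0 : 0 < d) by (unfold d; apply Rmin_pos; lra).
  assert (Hd1 : d <= e / 4) by apply Rmin_l. assert (Hd2 : d <= 1/2) by apply Rmin_r.
  destruct (Hy d Hd0) as [p [Hp Hdp]].
  destruct (small_k (e/2)) as [k Hk]; [lra|].
  destruct (near_unit X y p Hsy) as [Hp0 Hu]; [lra|].
  destruct (psi_ok X C p k HCd Hp0) as [Hc Hdc].
  exists (psi X C p k). split; [split; [|split]|]; auto.
  - apply closure_incl. apply W_psi; auto.
  - assert (T := dist_tri X y (unitv X p) (psi X C p k)). lra.
Qed.


Lemma infin_mono {T : Type} (P Q : T -> Prop) : (forall x, P x -> Q x) -> infin P -> infin Q.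
Proof. intros H HP l; destruct (HP l) as [x [Px Hx]]; exists x; auto. Qed.

Lemma stage_card (X : Banach) G0 C S0 : infin S0 -> forall n, cle (stage X G0 C S0 n) S0.
Proof.
  intros Hinf n. induction n as [|n IH]; [apply cle_refl|].
  apply cle_trans with (stage X G0 C S0 n); auto.
  assert (Hin : infin (stage X G0 C S0 n)).
  { apply (infin_mono S0); auto. intros x Hx; apply (stage_le X G0 C S0 0); [lia|auto]. }
  destruct (hessenberg (@vzero X) _ Hin) as [F [F1 F2]].
  destruct (infin_nat _ Hin) as [e [e1 e2]].
  set (Pn := stage X G0 C S0 n).
  set (good := fun x (tp : nat * nat * nat * nat * X * X * X) =>
     match tp with (t,i,j,k,a,b,c) => Pn a /\ Pn b /\ Pn c /\ x = op X G0 C t i j k a b c end).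
  set (ch := fun x => epsilon (inhabits (0%nat,0%nat,0%nat,0%nat,@vzero X,@vzero X,@vzero X)) (good x)).
  assert (Hch : forall x, stage X G0 C S0 (S n) x -> good x (ch x)).
  { intros x [t [i [j [k [a [b [c H]]]]]]]. unfold ch. apply epsilon_spec.
    exists (t,i,j,k,a,b,c); exact H. }
  set (code := fun x => match ch x with (t,i,j,k,a,b,c) =>
     F (e t) (F (e i) (F (e j) (F (e k) (F a (F b c))))) end).
  exists code. split.
  - intros x Hx. specialize (Hch x Hx). unfold code.
    destruct (ch x) as [[[[[[t i] j] k] a] b] c]. destruct Hch as [Ha [Hb [Hc _]]].
    repeat (apply F1; auto).
  - intros x y Hx Hy Hq. assert (Cx := Hch x Hx). assert (Cy := Hch y Hy). unfold code in Hq.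
    destruct (ch x) as [[[[[[t i] j] k] a] b] c]. destruct (ch y) as [[[[[[t' i'] j'] k'] a'] b'] c'].
    destruct Cx as [Ha [Hb [Hc Ex]]]. destruct Cy as [Ha' [Hb' [Hc' Ey]]].
    apply F2 in Hq; [|auto|repeat (apply F1; auto)|auto|repeat (apply F1; auto)]. destruct Hq as [Q1 Hq].
    apply F2 in Hq; [|auto|repeat (apply F1; auto)|auto|repeat (apply F1; auto)]. destruct Hq as [Q2 Hq].
    apply F2 in Hq; [|auto|repeat (apply F1; auto)|auto|repeat (apply F1; auto)]. destruct Hq as [Q3 Hq].
    apply F2 in Hq; [|auto|repeat (apply F1; auto)|auto|repeat (apply F1; auto)]. destruct Hq as [Q4 Hq].
    apply F2 in Hq; [|auto|repeat (apply F1; auto)|auto|repeat (apply F1; auto)]. destruct Hq as [Q5 Hq].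
    apply F2 in Hq; auto. destruct Hq as [Q6 Q7].
    apply e2 in Q1; apply e2 in Q2; apply e2 in Q3; apply e2 in Q4. subst. auto.
Qed.

Lemma W_card (X : Banach) G0 C S0 : infin S0 -> cle (Wset X G0 C S0) S0.
Proof.
  intros Hinf.
  destruct (choice (fun n (f : X -> X) => (forall x, stage X G0 C S0 n x -> S0 (f x)) /\
     (forall x y, stage X G0 C S0 n x -> stage X G0 C S0 n y -> f x = f y -> x = y))) as [f Hf].
  { intro n; apply stage_card; auto. }
  destruct (hessenberg (@vzero X) _ Hinf) as [F [F1 F2]].
  destruct (infin_nat _ Hinf) as [e [e1 e2]].
  set (nx := fun x => epsilon (inhabits 0%nat) (fun n => stage X G0 C S0 n x)).
  assert (Hnx : forall x, Wset X G0 C S0 x -> stage X G0 C S0 (nx x) x).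
  { intros x Hx; unfold nx; apply epsilon_spec; auto. }
  exists (fun x => F (e (nx x)) (f (nx x) x)). split.
  - intros x Hx. apply F1; auto. apply (proj1 (Hf (nx x))); auto.
  - intros x y Hx Hy Hq. apply F2 in Hq; auto; try apply (proj1 (Hf _)); auto.
    destruct Hq as [Q1 Q2]. apply e2 in Q1. rewrite <- Q1 in Q2.
    apply (proj2 (Hf (nx x))); auto. rewrite Q1; auto.
Qed.


Lemma in_list_closure (X : Banach) (l : list X) (a : X) :
  (forall e, 0 < e -> exists y, In y l /\ Defs.dist X a y < e) -> In a l.
Proof.
  induction l as [|y l IH]; intro H.
  - destruct (H 1) as [y [[] _]]; lra.
  - destruct (classic (a = y)) as [->|Hne]; [left; auto|right].
    assert (Hd : 0 < Defs.dist X a y).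
    { destruct (dist_ge0 X a y) as [h|h]; auto. exfalso; apply Hne; apply dist_eq0; auto. }
    apply IH. intros e He. destruct (H (Rmin e (Defs.dist X a y))) as [y' [[Eq|Hin] Hd']].
    + apply Rmin_pos; auto.
    + subst y'. assert (Rmin e (Defs.dist X a y) <= Defs.dist X a y) by apply Rmin_r. lra.
    + exists y'; split; auto. assert (Rmin e (Defs.dist X a y) <= e) by apply Rmin_l. lra.
Qed.

Lemma dens_inf_infin (X : Banach) (A D : X -> Prop) : dens_infinite X A ->
  (forall a, A a -> forall e, 0 < e -> exists d, D d /\ Defs.dist X a d < e) -> infin D.
Proof.
  intros HA HD l. apply NNPP; intro Hn.
  assert (HDl : forall x, D x -> In x l).
  { intros x Hx; apply NNPP; intro; apply Hn; eauto. }
  apply (HA A (fun x h => h)).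
  - intros a Ha e He; exists a; split; auto; rewrite dist_self; auto.
  - exists l. intros a Ha. apply in_list_closure. intros e He.
    destruct (HD a Ha e He) as [d [Hd Hdd]]. exists d; split; auto.
Qed.

Lemma nets (X : Banach) (A : X -> Prop) : dens_infinite X A ->
  exists S0, (forall x, S0 x -> A x) /\ dense_in X S0 A /\ infin S0 /\
    forall D, (forall a, A a -> forall e, 0 < e -> exists d, D d /\ Defs.dist X a d < e) -> cle S0 D.
Proof.
  intro HA.
  set (Good := fun (k : nat) (N : X -> Prop) => (forall x, N x -> A x) /\
      (forall x y, N x -> N y -> x <> y -> / (INR k + 1) <= Defs.dist X x y)).
  destruct (choice (fun k N => Good k N /\ forall a, A a -> exists x, N x /\ Defs.dist X a x < / (INR k + 1))) as [N HN].
  { intro k. destruct (zorn_sets (Good k) (fun _ => False)) as [M [[G1 G2] [_ Hmax]]].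
    - split; intros; contradiction.
    - intros Ch HG Hc _. split.
      + intros x [S [HS Sx]]; apply (proj1 (HG S HS)); auto.
      + intros x y [S [HS Sx]] [S' [HS' Sy]] Hne.
        destruct (Hc S S' HS HS') as [I|I].
        * apply (proj2 (HG S' HS')); auto.
        * apply (proj2 (HG S HS)); auto.
    - exists M. split; [split; auto|].
      intros a Ha. apply NNPP; intro Hn.
      assert (Hfar : forall x, M x -> / (INR k + 1) <= Defs.dist X a x).
      { intros x Hx. apply Rnot_lt_le; intro; apply Hn; eauto. }
      assert (Hin : incl_s (fun x => M x \/ x = a) M).
      { apply Hmax; [|intros x h; left; auto]. split.
        - intros x [h| ->]; auto.
        - intros x y [hx| ->] [hy| ->] Hne; auto.
          + rewrite dist_sym; auto.
          + exfalso; auto. }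
      assert (Ma : M a) by (apply Hin; right; auto).
      specialize (Hfar a Ma). rewrite dist_self in Hfar.
      assert (0 < / (INR k + 1)) by (apply Rinv_0_lt_compat; assert (0 <= INR k) by apply pos_INR; lra).
      lra. }
  set (S0 := fun x => exists k, N k x).
  assert (Hsub : forall x, S0 x -> A x) by (intros x [k Hk]; apply (proj1 (proj1 (HN k))); auto).
  assert (Hdense : dense_in X S0 A).
  { intros a Ha e He. destruct (small_k e He) as [k Hk].
    destruct (proj2 (HN k) a Ha) as [x [Hx Hd]]. exists x; split; [exists k; auto|lra]. }
  exists S0. split; [auto|split; [auto|split]].
  - apply (dens_inf_infin X A); auto.
  - intros D HD. assert (HiD := dens_inf_infin X A D HA HD).
    destruct (hessenberg (@vzero X) _ HiD) as [F [F1 F2]].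
    destruct (infin_nat _ HiD) as [e [e1 e2]].
    set (kx := fun x => epsilon (inhabits 0%nat) (fun k => N k x)).
    assert (Hkx : forall x, S0 x -> N (kx x) x) by (intros x Hx; unfold kx; apply epsilon_spec; auto).
    set (dx := fun x => epsilon (inhabits (@vzero X)) (fun d => D d /\ Defs.dist X x d < / (3 * (INR (kx x) + 1)))).
    assert (Hdx : forall x, S0 x -> D (dx x) /\ Defs.dist X x (dx x) < / (3 * (INR (kx x) + 1))).
    { intros x Hx; unfold dx; apply epsilon_spec. apply HD; auto.
      apply Rinv_0_lt_compat. assert (0 <= INR (kx x)) by apply pos_INR; lra. }
    exists (fun x => F (e (kx x)) (dx x)). split.
    + intros x Hx; apply F1; auto; apply Hdx; auto.
    + intros x y Hx Hy Hq. apply F2 in Hq; auto; try apply Hdx; auto.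
      destruct Hq as [Q1 Q2]. apply e2 in Q1.
      apply NNPP; intro Hne.
      assert (Sep := proj2 (proj1 (HN (kx x))) x y (Hkx x Hx) ltac:(rewrite Q1; apply Hkx; auto) Hne).
      destruct (Hdx x Hx) as [_ D1]. destruct (Hdx y Hy) as [_ D2].
      rewrite <- Q1, <- Q2 in D2. rewrite dist_sym in D2.
      assert (T := dist_tri X x (dx x) y).
      set (K := INR (kx x) + 1) in *.
      assert (HK : 0 < K) by (unfold K; assert (0 <= INR (kx x)) by apply pos_INR; lra).
      assert (E : / (3 * K) = / K / 3) by (field; lra).
      rewrite E in D1, D2. assert (0 < / K) by (apply Rinv_0_lt_compat; auto). lra.
Qed.


Theorem theorem2p4 (X : Banach) (G0 : (X -> X) -> Prop)
  (C : X -> Prop) (A : X -> Prop) :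
  rot_subgroup X G0 ->
  convex_transitive X G0 ->
  (forall x, C x -> sphere X x) ->
  dense_in X C (sphere X) ->
  closed_subspace X A ->
  dens_infinite X A ->
  exists Y : X -> Prop,
    closed_subspace X Y /\
    (forall x, A x -> Y x) /\
    dens_eq X Y A /\
    convex_transitive_sub X G0 Y /\
    dense_in X (fun x => C x /\ Y x /\ sphere X x) (fun y => Y y /\ sphere X y).
Proof.
  intros Hrot Hct HCs HCd HA HAinf.
  destruct (nets X A HAinf) as [S0 [HS0A [HS0d [HS0i HS0c]]]].
  destruct (HS0i nil) as [s0 [Hs0 _]].
  exists (Yset X G0 C S0).
  assert (HAY : forall x, A x -> Yset X G0 C S0 x).
  { intros a Ha e He. destruct (HS0d a Ha e He) as [s [Hs Hd]].
    exists s; split; auto. apply W_S0; auto. }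
  split; [apply (Y_subspace X G0 C S0 s0); auto|].
  split; [auto|].
  split; [split|split].
  - intros D HDA HDd. exists (Wset X G0 C S0). split; [|split].
    + intros x Hx; apply closure_incl; auto.
    + intros y Hy e He; exact (Hy e He).
    + exact (cle_trans _ _ _ (W_card X G0 C S0 HS0i) (HS0c D HDd)).
  - intros D HDY HDd. exists S0. split; [auto|split; [auto|]].
    apply HS0c. intros a Ha; apply HDd; auto.
  - apply Y_ct; auto.
  - apply Y_Cdense; auto.
Qed.
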